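(* Let $\Phi=C_l$ with $l\ge2$, fix a system of positive roots $\Phi^+$, and let $\Delta$ be a nonempty subset of $\Phi^+$. Then there exist a short root $\alpha\in\Phi^+$ and a root $\beta\in\Delta$ such that $(\alpha,\beta)\ne0$ and, for every field $F$ of characteristic $2$, the root subgroup $X_\alpha(F)$ of the Chevalley group $G(\Phi,F)$ commutes elementwise with all root subgroups $X_\gamma(F)$, $\gamma\in\Delta$.
   Context: $X_\gamma(F)=\{x_\gamma(t)\mid t\in F\}$ is the root subgroup of the Chevalley group $G(\Phi,F)$ corresponding to the root $\gamma$; $(\cdot,\cdot)$ is the inner product of the ambient Euclidean space. *)

(* Defs.v *)
From HB Require Import structures.
From mathcomp Require Import all_boot all_order all_algebra.
Set Implicit Arguments. Unset Strict Implicit. Unset Printing Implicit Defensive.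
Import Order.TTheory GRing.Theory Num.Theory.
Local Open Scope ring_scope.

Definition vec (l : nat) := {ffun 'I_l -> int}.

Definition ev (l : nat) (i : 'I_l) : vec l := [ffun k => ((k == i) : nat)%:Z].

Definition dotv (l : nat) (v w : vec l) : int := \sum_(k < l) v k * w k.

Definition is_rootC (l : nat) (v : vec l) : Prop :=
  exists (i j : 'I_l),
    (i != j /\ (v = ev i - ev j \/ v = ev i + ev j \/ v = - (ev i + ev j)))
    \/ (i = j /\ (v = ev i + ev i \/ v = - (ev i + ev i))).

Definition is_short (l : nat) (v : vec l) : Prop := dotv v v = 2.

(* a linear functional f (given by its values on e_1..e_l) is regular if it
   vanishes on no root; it then defines the positive system
   Phi^+ = { gamma in Phi | f(gamma) > 0 }.  Every positive system of C_l
   arises this way. *)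
Definition regular_functional (l : nat) (f : vec l) : Prop :=
  forall v : vec l, is_rootC v -> dotv f v != 0.

Definition is_pos_root (l : nat) (f : vec l) (v : vec l) : Prop :=
  is_rootC v /\ 0 < dotv f v.

(* root vector e_v in sp_{2l}(F), with the symplectic form [[0,I],[-I,0]]:
   block matrix [[A, B], [C, -A^T]] where
   A = E_ij for v = e_i - e_j, B = E_ij + E_ji for v = e_i + e_j (E_ii for
   v = 2 e_i), C likewise for v = -(e_i + e_j). *)
Definition rootmx (F : fieldType) (l : nat) (v : vec l) : 'M[F]_(l + l) :=
  block_mx
    (\matrix_(i < l, j < l) ((v == ev i - ev j) : nat)%:R)
    (\matrix_(i < l, j < l) ((v == ev i + ev j) : nat)%:R)
    (\matrix_(i < l, j < l) ((v == - (ev i + ev j)) : nat)%:R)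
    (\matrix_(i < l, j < l) - ((v == ev j - ev i) : nat)%:R).

(* root element x_v(t) = exp(t e_v) = 1 + t e_v  (e_v^2 = 0 in the natural
   representation); X_v(F) = { x_v(t) | t in F }. *)
Definition xroot (F : fieldType) (l : nat) (v : vec l) (t : F) : 'M[F]_(l + l) :=
  1%:M + t *: rootmx F v.

(* Main.v *)
Require Import Defs.
From HB Require Import structures.
From mathcomp Require Import all_boot all_order all_algebra.
From mathcomp Require Import zify.
Import Order.TTheory GRing.Theory Num.Theory.
Local Open Scope ring_scope.

Section Dot.
Variable l : nat.
Implicit Types u v w : vec l.

Lemma dotvDl u v w : dotv (u + v) w = dotv u w + dotv v w.
Proof. by rewrite /dotv -big_split; apply: eq_bigr => k _; rewrite !ffunE mulrDl. Qed.
Lemma dotvNl u w : dotv (- u) w = - dotv u w.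
Proof. by rewrite /dotv -sumrN; apply: eq_bigr => k _; rewrite !ffunE mulNr. Qed.
Lemma dotvC u w : dotv u w = dotv w u.
Proof. by rewrite /dotv; apply: eq_bigr => k _; rewrite mulrC. Qed.
Lemma dotvDr u v w : dotv w (u + v) = dotv w u + dotv w v.
Proof. by rewrite !(dotvC w) dotvDl. Qed.
Lemma dotvNr u w : dotv w (- u) = - dotv w u.
Proof. by rewrite !(dotvC w) dotvNl. Qed.
Lemma dotvBl u v w : dotv (u - v) w = dotv u w - dotv v w.
Proof. by rewrite dotvDl dotvNl. Qed.
Lemma dotvBr u v w : dotv w (u - v) = dotv w u - dotv w v.
Proof. by rewrite dotvDr dotvNr. Qed.
Lemma dotv_evr w (i : 'I_l) : dotv w (ev i) = w i.
Proof.
rewrite /dotv (bigD1 i) //= big1 ?addr0; first by rewrite ffunE eqxx mulr1.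
by move=> k /negbTE hk; rewrite ffunE hk mulr0.
Qed.
Lemma dotv_ev (i j : 'I_l) : dotv (ev i) (ev j) = ((i == j) : nat)%:Z.
Proof. by rewrite dotv_evr ffunE eq_sym. Qed.
End Dot.
Ltac dsimp := rewrite ?(dotvBl, dotvBr, dotvDl, dotvNl, dotvDr, dotvNr, dotv_ev).

Section Roots.
Variable l : nat.

Lemma root_dot (v : vec l) : is_rootC v -> dotv v v = 2 \/ dotv v v = 4.
Proof.
move=> [i [j [[hij [->|[->|->]]]|[_ [->|->]]]]]; dsimp;
  rewrite ?eqxx ?(negbTE hij) 1?eq_sym ?(negbTE hij); (left; lia) || (right; lia).
Qed.

Lemma rootN (v : vec l) : is_rootC v -> is_rootC (- v).
Proof.
move=> [i [j [[hij [->|[->|->]]]|[_ [->|->]]]]].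
- exists j, i; left; split; first by rewrite eq_sym.
  by left; rewrite opprB.
- by exists i, j; left; split => //; right; right.
- by exists i, j; left; split => //; right; left; rewrite opprK.
- by exists i, i; right; split => //; right.
- by exists i, i; right; split => //; left; rewrite opprK.
Qed.

Lemma short1 (i j : 'I_l) : i != j -> is_short (ev i - ev j).
Proof. move=> hij; rewrite /is_short; dsimp; rewrite !eqxx (negbTE hij) eq_sym (negbTE hij); lia. Qed.
Lemma short2 (i j : 'I_l) : i != j -> is_short (ev i + ev j).
Proof. move=> hij; rewrite /is_short; dsimp; rewrite !eqxx (negbTE hij) eq_sym (negbTE hij); lia. Qed.
Lemma short3 (i j : 'I_l) : i != j -> is_short (- (ev i + ev j)).
Proof. move=> hij; rewrite /is_short; dsimp; rewrite !eqxx (negbTE hij) eq_sym (negbTE hij); lia. Qed.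

Definition wt (p : 'I_(l + l)) : vec l :=
  match split p with inl i => ev i | inr i => - ev i end.
Definition opp (p : 'I_(l + l)) : 'I_(l + l) :=
  match split p with inl i => rshift l i | inr i => lshift l i end.

Lemma wt_opp p : wt (opp p) = - wt p.
Proof.
rewrite /wt /opp; case: (split p) => i.
  by rewrite (unsplitK (inr i : 'I_l + 'I_l)).
by rewrite (unsplitK (inl i : 'I_l + 'I_l)) opprK.
Qed.

Lemma oppK : involutive opp.
Proof.
move=> p; rewrite -[p]splitK; case: (split p) => i.
  by rewrite /opp (unsplitK (inl i : 'I_l + 'I_l)) (unsplitK (inr i : 'I_l + 'I_l)).
by rewrite /opp (unsplitK (inr i : 'I_l + 'I_l)) (unsplitK (inl i : 'I_l + 'I_l)).
Qed.

Lemma rootmxE (F : fieldType) (v : vec l) p q : (2 \in [pchar F])%N ->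
  rootmx F v p q = ((v == wt p - wt q) : nat)%:R.
Proof.
move=> h2; rewrite /wt -[p]splitK -[q]splitK; case: (split p) => i; case: (split q) => j.
- by rewrite block_mxEul mxE (unsplitK (inl i : 'I_l + 'I_l)) (unsplitK (inl j : 'I_l + 'I_l)).
- by rewrite block_mxEur mxE (unsplitK (inl i : 'I_l + 'I_l)) (unsplitK (inr j : 'I_l + 'I_l)) opprK.
- by rewrite block_mxEdl mxE (unsplitK (inr i : 'I_l + 'I_l)) (unsplitK (inl j : 'I_l + 'I_l)) opprD.
- rewrite block_mxEdr mxE (unsplitK (inr i : 'I_l + 'I_l)) (unsplitK (inr j : 'I_l + 'I_l)).
  by rewrite (oppr_pchar2 h2) opprK addrC.
Qed.
End Roots.
Arguments wt {l} p.
Arguments opp {l} p.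
Arguments rootmxE {l F} v p q.
Arguments oppK {l}.
Arguments root_dot {l v}.
Arguments rootN {l v}.
Section Comm.
Variable l : nat.

Lemma comm_mx {F : fieldType} (a g : vec l) : (2 \in [pchar F])%N ->
  (forall p r, a + g = wt p - wt r -> wt r = - wt p) ->
  rootmx F a *m rootmx F g = rootmx F g *m rootmx F a.
Proof.
move=> h2 H; apply/matrixP => p r; rewrite !mxE.
under eq_bigr do rewrite !(rootmxE _ _ _ h2).
under [RHS]eq_bigr do rewrite !(rootmxE _ _ _ h2).
case: (eqVneq (a + g) (wt p - wt r)) => hag.
  have Hr := H _ _ hag.
  rewrite [RHS](reindex_inj (can_inj (@oppK l))); apply: eq_bigr => q _.
  rewrite !wt_opp Hr !opprK mulrC; congr (_ * _); first by rewrite addrC.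
  by rewrite addrC.
rewrite !big1 // => q _.
  case: eqP => hg; case: eqP => ha; rewrite ?mul0r ?mulr0 //.
  by move: hag; rewrite hg ha addrC addrA subrK eqxx.
case: eqP => ha; case: eqP => hg; rewrite ?mul0r ?mulr0 //.
by move: hag; rewrite hg ha addrA subrK eqxx.
Qed.

Lemma comm_x (F : fieldType) (a g : vec l) : (2 \in [pchar F])%N ->
  (forall p r, a + g = wt p - wt r -> wt r = - wt p) ->
  forall t u : F, xroot a t *m xroot g u = xroot g u *m xroot a t.
Proof.
move=> h2 H t u; have E := comm_mx (F:=F) a g h2 H.
rewrite /xroot !mulmxDl !mulmxDr !mul1mx !mulmx1 -!scalemxAl -!scalemxAr E.
rewrite !scalerA mulrC; rewrite -!addrA; congr (_ + _).
by rewrite !addrA (addrC (t *: _)).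
Qed.
End Comm.
From Stdlib Require Import Classical.

Section Main.
Variable l : nat.
Variable f : vec l.
Hypothesis hf : regular_functional f.
Variable Delta : vec l -> Prop.
Hypothesis hDpos : forall g, Delta g -> is_pos_root f g.

Definition Pset (a : vec l) :=
  is_pos_root f a /\ is_short a /\ exists b, Delta b /\ dotv a b != 0.

Lemma dotv0r (v : vec l) : dotv v 0 = 0.
Proof. by rewrite /dotv big1 // => k _; rewrite ffunE mulr0. Qed.

Lemma step (a g : vec l) p r : Pset a -> Delta g ->
  a + g = wt p - wt r -> wt r <> - wt p ->
  Pset (a + g) /\ dotv f a < dotv f (a + g).
Proof.
move=> [[ra fa] [sa _]] Dg E Hne.
have [rg fg] := hDpos _ Dg.
have fs : dotv f (a + g) = dotv f a + dotv f g by rewrite dotvDr.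
have [rs ss] : is_rootC (a + g) /\ is_short (a + g).
  have zero : a + g <> 0.
    move=> h0; move: fs; rewrite h0 dotv0r; lia.
  move: E Hne; rewrite /wt -[p]splitK -[r]splitK.
  case: (split p) => i; case: (split r) => j; rewrite ?unsplitK => E Hne.
  - case: (eqVneq i j) => hij.
      by exfalso; apply: zero; rewrite E hij subrr.
    rewrite E; split; last exact: short1.
    by exists i, j; left; split => //; left.
  - have hij : i != j by apply/eqP => hij; apply: Hne; rewrite hij.
    rewrite E opprK; split; last exact: short2.
    by exists i, j; left; split => //; right; left.
  - have hij : i != j by apply/eqP => hij; apply: Hne; rewrite hij opprK.
    rewrite E -opprD; split; last exact: short3.
    by exists i, j; left; split => //; right; right.
  - case: (eqVneq j i) => hij.
      by exfalso; apply: zero; rewrite E hij subrr.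
    rewrite E opprK addrC; split; last exact: short1.
    by exists j, i; left; split => //; left.
split; last by rewrite fs; lia.
split; first by split => //; rewrite fs; lia.
split; first exact: ss.
exists g; split => //.
have Hs : dotv (a + g) (a + g) = dotv a a + dotv a g + dotv g a + dotv g g.
  by rewrite dotvDl !dotvDr addrA.
have Hsg : dotv (a + g) g = dotv a g + dotv g g by rewrite dotvDl.
move: Hs Hsg; rewrite (@dotvC l g a) ss sa.
have := root_dot rg => hg.
move=> Hs Hsg; apply/eqP => h0; rewrite h0 in Hsg; lia.
Qed.

Definition Ssum := \sum_(k < l) `|f k|.

Lemma le_S (i : 'I_l) : `|f i| <= Ssum.
Proof.
rewrite /Ssum (bigD1 i) //= lerDl; apply: sumr_ge0 => k _; exact: normr_ge0.
Qed.

Lemma bound (v : vec l) : is_rootC v -> dotv f v <= Ssum + Ssum.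
Proof.
move=> [i [j [[hij [->|[->|->]]]|[_ [->|->]]]]]; dsimp; rewrite ?dotv_evr;
  have := le_S i; have := le_S j; lia.
Qed.

Lemma maximal (n : nat) (a : vec l) : Pset a -> Ssum + Ssum - dotv f a <= n%:Z ->
  exists a', Pset a' /\ forall a'', Pset a'' -> dotv f a'' <= dotv f a'.
Proof.
elim: n a => [|n IH] a Pa hn.
  case: (classic (forall a'', Pset a'' -> dotv f a'' <= dotv f a)) => Hm.
    by exists a.
  have [a' Ha'] := not_all_ex_not _ _ Hm.
  have [Pa' /negP hlt] := imply_to_and _ _ Ha'.
  rewrite -ltNge in hlt.
  have hb := bound _ (proj1 (proj1 Pa')).
  exfalso; lia.
case: (classic (forall a'', Pset a'' -> dotv f a'' <= dotv f a)) => Hm.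
  by exists a.
have [a' Ha'] := not_all_ex_not _ _ Hm.
  have [Pa' /negP hlt] := imply_to_and _ _ Ha'.
  rewrite -ltNge in hlt.
have hb := bound _ (proj1 (proj1 Pa')).
apply: (IH a' Pa'); lia.
Qed.

End Main.

Theorem lemma5p7 (l : nat) (hl : (2 <= l)%N) (f : vec l)
    (hf : regular_functional f) (Delta : vec l -> Prop)
    (hDpos : forall g, Delta g -> is_pos_root f g)
    (hDne : exists g, Delta g) :
  exists (a b : vec l),
    [/\ is_pos_root f a, is_short a, Delta b, dotv a b != 0 &
      forall (F : fieldType), (2 \in [pchar F])%N ->
        forall g, Delta g ->
          forall t u : F, xroot a t *m xroot g u = xroot g u *m xroot a t].
Proof.
have [b0 Db0] := hDne.
have [rb fb] := hDpos _ Db0.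
have [a0 Pa0] : exists a, @Pset l f Delta a.
  suff [c [rc [sc hc]]] : exists c, is_rootC c /\ is_short c /\ dotv c b0 != 0.
    have hfc := hf _ rc.
    case: (ltrP 0 (dotv f c)) => hpos.
      by exists c; split; [by split|split => //; exists b0; split].
    exists (-c); split; [split; [exact: rootN| rewrite dotvNr; lia] | split].
      by rewrite /is_short dotvNl dotvNr opprK.
    by exists b0; split => //; rewrite dotvNl oppr_eq0.
  have rb' := rb.
  move: rb => [i [j [[hij [Eb|[Eb|Eb]]]|[_ [Eb|Eb]]]]].
  - have sb : is_short b0 by rewrite Eb; exact: short1.
    by exists b0; split => //; split => //; rewrite sb.
  - have sb : is_short b0 by rewrite Eb; exact: short2.
    by exists b0; split => //; split => //; rewrite sb.
  - have sb : is_short b0 by rewrite Eb; exact: short3.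
    by exists b0; split => //; split => //; rewrite sb.
  - have [k hk] : exists k : 'I_l, i != k.
      pose k0 : 'I_l := Ordinal (ltnW hl); pose k1 : 'I_l := Ordinal hl.
      case: (eqVneq i k0) => h; last by exists k0.
      by exists k1; rewrite h; apply/eqP => /(congr1 val).
    exists (ev i + ev k); split; first by exists i, k; left; split => //; right; left.
    split; first exact: short2.
    have hk2 : (k == i) = false by rewrite eq_sym (negbTE hk).
    rewrite Eb; dsimp; rewrite ?eqxx ?(negbTE hk) ?hk2; lia.
  - have [k hk] : exists k : 'I_l, i != k.
      pose k0 : 'I_l := Ordinal (ltnW hl); pose k1 : 'I_l := Ordinal hl.
      case: (eqVneq i k0) => h; last by exists k0.
      by exists k1; rewrite h; apply/eqP => /(congr1 val).
    exists (ev i + ev k); split; first by exists i, k; left; split => //; right; left.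
    split; first exact: short2.
    have hk2 : (k == i) = false by rewrite eq_sym (negbTE hk).
    rewrite Eb; dsimp; rewrite ?eqxx ?(negbTE hk) ?hk2; lia.
have := @maximal l f Delta `|(Ssum l f + Ssum l f - dotv f a0)%R|%N a0 Pa0.
rewrite abszE => /(_ (ler_norm _)) [a [Pa Hmax]].
have Pa' := Pa.
move: Pa' => [pa [sa [b [Db hb]]]].
exists a, b; split => // F h2 g Dg.
apply: (@comm_x l F a g h2) => p r E.
apply: NNPP => Hne.
have [Pag hlt] := @step l f Delta hDpos a g p r Pa Dg E Hne.
have := Hmax _ Pag; lia.
Qed.
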